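(* Let $r\ge1$ and $n\in\mathbb{Z}_{>0}$. Every $\omega\in\Omega^r_n$ satisfies $|\xi|\le|\omega|\le|\xi|\,|\pi|^{-n}$.
   Context: Let $F$ be a global function field, $\infty$ a place of $F$, $\pi$ a uniformizer at $\infty$, $F_\infty$ the completion at $\infty$, $\mathbb{C}_\infty$ the completion of an algebraic closure of $F_\infty$ with absolute value $|\cdot|$. Fix $\xi\in\mathbb{C}_\infty^\times$. $\Omega^r$ is the set of column vectors $\omega=(\omega_1,\dots,\omega_r)^T\in\mathbb{C}_\infty^r$ with $F_\infty$-linearly independent entries and $\omega_r=\xi$. A linear form $F_\infty^r\to F_\infty$ is unimodular if its largest coefficient has absolute value $1$. Put $|\omega|:=\max_i|\omega_i|$, $h(\omega):=|\omega|^{-1}\inf\{|\ell(\omega)|:\ell$ a unimodular $F_\infty$-linear form$\}$, and $\Omega^r_n:=\{\omega\in\Omega^r:h(\omega)\ge|\pi|^n\}$. *)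

(* Defs.v *)
From HB Require Import structures.
From mathcomp Require Import all_boot all_order all_algebra.
From mathcomp Require Import all_classical all_reals.
Set Implicit Arguments. Unset Strict Implicit. Unset Printing Implicit Defensive.
Import Order.TTheory GRing.Theory Num.Theory.
Local Open Scope ring_scope.
Local Open Scope classical_set_scope.

Section Defs.
Variables (R : realType) (C : closedFieldType) (abs : C -> R).

Definition is_nonarch_abs : Prop :=
  [/\ forall x, 0 <= abs x,
      forall x, abs x = 0 <-> x = 0,
      forall x y, abs (x * y) = abs x * abs y &
      forall x y, abs (x + y) <= Num.max (abs x) (abs y)].

Definition abs_cauchy (u : nat -> C) : Prop :=
  forall e : R, 0 < e -> exists N, forall m n, (N <= m)%N -> (N <= n)%N ->
    abs (u m - u n) < e.

Definition abs_converges_to (u : nat -> C) (l : C) : Prop :=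
  forall e : R, 0 < e -> exists N, forall n, (N <= n)%N -> abs (u n - l) < e.

Definition abs_complete_in (K : C -> Prop) : Prop :=
  forall u : nat -> C, (forall n, K (u n)) -> abs_cauchy u ->
    exists2 l, K l & abs_converges_to u l.

Definition is_subfield (K : C -> Prop) : Prop :=
  [/\ K 0, K 1, forall x y, K x -> K y -> K (x - y),
      forall x y, K x -> K y -> K (x * y) &
      forall x, K x -> K x^-1].

(* Standing setting: C = C_infty (algebraically closed, complete), K = F_infty
   a complete subfield, discretely valued with uniformizer pi. *)
Definition function_field_setting (K : C -> Prop) (pi : C) : Prop :=
  [/\ is_nonarch_abs, abs_complete_in (fun _ => True),
      is_subfield K, abs_complete_in K &
      [/\ K pi, 0 < abs pi, abs pi < 1 &
          forall x, K x -> x <> 0 -> exists k : int, abs x = abs pi ^ k]].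

Variable K : C -> Prop.

Definition K_lin_indep (r : nat) (w : 'cV[C]_r) : Prop :=
  forall a : 'I_r -> C, (forall i, K (a i)) ->
    \sum_i a i * w i 0 = 0 -> forall i, a i = 0.

Definition Omega (r : nat) (xi : C) : set 'cV[C]_r :=
  [set w | K_lin_indep w /\ forall i : 'I_r, val i = r.-1 -> w i 0 = xi].

Definition unimodular (r : nat) (a : 'I_r -> C) : Prop :=
  (forall i, K (a i)) /\ \big[Num.max/0]_i abs (a i) = 1.

Definition lform (r : nat) (a : 'I_r -> C) (w : 'cV[C]_r) : C :=
  \sum_i a i * w i 0.

Definition vnorm (r : nat) (w : 'cV[C]_r) : R := \big[Num.max/0]_i abs (w i 0).

Definition hgt (r : nat) (w : 'cV[C]_r) : R :=
  (vnorm w)^-1 * inf [set abs (lform a w) | a in [set a | unimodular a]].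

Definition Omega_n (r : nat) (xi pi : C) (n : nat) : set 'cV[C]_r :=
  [set w | @Omega r xi w /\ abs pi ^+ n <= hgt w].

End Defs.

(* Main.v *)
Require Import Defs.
From HB Require Import structures.
From mathcomp Require Import all_boot all_order all_algebra.
From mathcomp Require Import all_classical all_reals.
Import Order.TTheory GRing.Theory Num.Theory.
Local Open Scope ring_scope.
Local Open Scope classical_set_scope.

Theorem lemma3p3 (R : realType) (C : closedFieldType) (abs : C -> R)
  (K : C -> Prop) (pi xi : C) (r n : nat) :
  function_field_setting abs K pi -> xi <> 0 ->
  (1 <= r)%N -> (0 < n)%N ->
  forall w : 'cV[C]_r, @Omega_n R C abs K r xi pi n w ->
    abs xi <= vnorm abs w /\ vnorm abs w <= abs xi * (abs pi ^+ n)^-1.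
Proof.
move=> [[ab0 abeq abM abD] _ [K0 K1 _ _ _] _ [_ pi0 _ _]] xi0 r1 _ w.
move=> [[_ wlast] hw].
have lt : (r.-1 < r)%N by rewrite prednK.
pose i0 : 'I_r := Ordinal lt.
have wi0 : w i0 0 = xi by apply: wlast.
have abs1 : abs 1 = 1.
  have h := abM 1 1; rewrite mulr1 in h.
  have nz : abs 1 != 0 by apply/eqP => /abeq/eqP; rewrite oner_eq0.
  by apply: (mulfI nz); rewrite -h mulr1.
have abs0 : abs 0 = 0 by apply/abeq.
have axi : 0 < abs xi by rewrite lt_def ab0 andbT; apply/eqP => /abeq.
have lo : abs xi <= vnorm abs w.
  by rewrite /vnorm -wi0; exact: le_bigmax.
split => //.
have vpos : 0 < vnorm abs w by apply: lt_le_trans lo.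
pose a := fun i : 'I_r => if i == i0 then (1 : C) else 0.
have ua : unimodular abs K a.
  split; first by move=> i; rewrite /a; case: ifP.
  apply/le_anti/andP; split.
    apply: bigmax_le => //= i _; rewrite /a; case: ifP => _; by rewrite ?abs1 ?abs0.
  apply: (le_trans _ (le_bigmax _ _ i0)).
  by rewrite /a eqxx abs1.
have la : lform a w = xi.
  rewrite /lform (bigD1 i0) //= big1 ?addr0.
    by rewrite /a eqxx mul1r.
  by move=> i /negbTE ni; rewrite /a ni mul0r.
have hinf : inf [set abs (lform a w) | a in [set a | unimodular abs K a]] <= abs xi.
  apply: ge_inf; last by exists a => //; rewrite la.
  by exists 0 => _ [b _ <-].
have pn : 0 < abs pi ^+ n by apply: exprn_gt0.
move: hw; rewrite /Omega_n /hgt => hw.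
have : abs pi ^+ n <= (vnorm abs w)^-1 * abs xi.
  apply: le_trans hw _; rewrite ler_pM2l ?invr_gt0 //.
move=> h.
have h2 : abs pi ^+ n * vnorm abs w <= abs xi.
  by move: h; rewrite mulrC -ler_pdivlMr.
by rewrite ler_pdivlMr // mulrC.
Qed.
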